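(* If $(A,\Delta)$ is a generalized multiplier Hopf coquasigroup with an identity, then $(A,\Delta)$ is a Hopf coquasigroup.
   Context: A generalized multiplier Hopf coquasigroup is: an associative algebra $A$ over a field $k$ with non-degenerate product, an algebra homomorphism $\Delta:A\to M(A\otimes A)$ (not necessarily coassociative) with Galois maps $T_{1}(a\otimes b)=\Delta(a)(1\otimes b)$, $T_{2}(a\otimes b)=(a\otimes 1)\Delta(b)$ in $A\otimes A$, and a linear $\varepsilon:A\to k$ with $(\varepsilon\otimes\iota)T_{1}(a\otimes b)=ab=(\iota\otimes\varepsilon)T_{2}(a\otimes b)$, such that $T_{1},T_{2}$ are bijective, $T_{1}^{-1}=(\iota\otimes\varepsilon\otimes\iota)(\iota\otimes T_{1}^{-1})(\Delta\otimes\iota)$ and $T_{2}^{-1}=(\iota\otimes\varepsilon\otimes\iota)(T_{2}^{-1}\otimes\iota)(\iota\otimes\Delta)$. The antipode $S$ is defined by $S(a)b=(\varepsilon\otimes\iota)T_{1}^{-1}(a\otimes b)$. If $A$ has an identity then $M(A)=A$, $M(A\otimes A)=A\otimes A$. A Hopf coquasigroup (in the sense of Klim–Majid) is a unital algebra $A$ with algebra maps $\Delta:A\to A\otimes A$, $\varepsilon:A\to k$ (counital, $\Delta$ not necessarily coassociative) and a linear $S:A\to A$ with $(m\otimes\iota)(S\otimes\Delta)\Delta(a)=1\otimes a=(m\otimes\iota)(\iota\otimes S\otimes\iota)(\iota\otimes\Delta)\Delta(a)$ and $(\iota\otimes m)(\Delta\otimes S)\Delta(a)=a\otimes 1=(\iota\otimes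 m)(\iota\otimes S\otimes\iota)(\Delta\otimes\iota)\Delta(a)$. *)

(* Defs.v *)
From HB Require Import structures.
From mathcomp Require Import all_boot all_order all_algebra.
Set Implicit Arguments. Unset Strict Implicit. Unset Printing Implicit Defensive.
Import GRing.Theory.
Local Open Scope ring_scope.

(* An element of V (x) W is represented by a finite formal sum               *)
(* sum_i v_i (x) w_i, i.e. a list of pairs.  Two representatives denote the  *)
(* same tensor iff they are identified by every k-bilinear map into every    *)
(* k-vector space (universal property of V (x) W), relation [teq].           *)

Definition tensor (V W : Type) := seq (V * W).

Definition bilinear_map (k : fieldType) (V W U : lmodType k) (b : V -> W -> U) :=
  (forall c v v' w, b (c *: v + v') w = c *: b v w + b v' w) /\
  (forall c v w w', b v (c *: w + w') = c *: b v w + b v w').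

Definition teval (k : fieldType) (V W U : lmodType k) (b : V -> W -> U)
  (s : tensor V W) : U := \sum_(x <- s) b x.1 x.2.

Definition teq (k : fieldType) (V W : lmodType k) (s t : tensor V W) : Prop :=
  forall (U : lmodType k) (b : V -> W -> U),
    bilinear_map b -> teval b s = teval b t.

Section HopfCoquasigroups.
Variables (k : fieldType) (A : algType k).

Definition tpure (a b : A) : tensor A A := [:: (a, b)].
Definition tmul (s t : tensor A A) : tensor A A :=
  [seq (x.1 * y.1, x.2 * y.2) | x <- s, y <- t].
Definition tscale (c : k) (s : tensor A A) : tensor A A :=
  [seq (c *: x.1, x.2) | x <- s].

Variables (Delta : A -> tensor A A) (eps : A -> k).

(* Galois maps T1(a(x)b) = Delta(a)(1(x)b), T2(a(x)b) = (a(x)1)Delta(b) *)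
Definition T1 (s : tensor A A) : tensor A A :=
  [seq (p.1, p.2 * x.2) | x <- s, p <- Delta x.1].
Definition T2 (s : tensor A A) : tensor A A :=
  [seq (x.1 * p.1, p.2) | x <- s, p <- Delta x.2].

Definition eps_id (s : tensor A A) : A := \sum_(x <- s) eps x.1 *: x.2.
Definition id_eps (s : tensor A A) : A := \sum_(x <- s) eps x.2 *: x.1.

(* maps involving A (x) A (x) A, represented by lists of ((a, b), c) *)
Definition Delta_id (s : tensor A A) : seq (A * A * A) :=
  [seq ((p.1, p.2), x.2) | x <- s, p <- Delta x.1].
Definition id_Delta (s : tensor A A) : seq (A * A * A) :=
  [seq ((x.1, p.1), p.2) | x <- s, p <- Delta x.2].
Definition id_tmap (T : tensor A A -> tensor A A) (s : seq (A * A * A))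
  : seq (A * A * A) :=
  [seq ((x.1.1, q.1), q.2) | x <- s, q <- T (tpure x.1.2 x.2)].
Definition tmap_id (T : tensor A A -> tensor A A) (s : seq (A * A * A))
  : seq (A * A * A) :=
  [seq ((q.1, q.2), x.2) | x <- s, q <- T (tpure x.1.1 x.1.2)].
Definition id_eps_id (s : seq (A * A * A)) : tensor A A :=
  [seq (x.1.1, eps x.1.2 *: x.2) | x <- s].

Definition tinverse (T Ti : tensor A A -> tensor A A) : Prop :=
  [/\ forall s t, teq s t -> teq (Ti s) (Ti t),
      forall s, teq (T (Ti s)) s &
      forall s, teq (Ti (T s)) s].

Definition linear_eps : Prop :=
  forall c a b, eps (c *: a + b) = c * eps a + eps b.

(* Delta is an algebra homomorphism A -> M(A (x) A) = A (x) A *)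
Definition Delta_alg_hom : Prop :=
  (forall c a b, teq (Delta (c *: a + b)) (tscale c (Delta a) ++ Delta b)) /\
  (forall a b, teq (Delta (a * b)) (tmul (Delta a) (Delta b))).

(* (A, Delta) with counit eps, where T1i, T2i are the inverses of T1, T2, *)
(* is a generalized multiplier Hopf coquasigroup (A has an identity, so   *)
(* M(A) = A, M(A (x) A) = A (x) A and the product is non-degenerate).     *)
Definition gen_mult_hopf_coquasigroup (T1i T2i : tensor A A -> tensor A A)
  : Prop :=
  [/\ Delta_alg_hom,
      linear_eps,
      (forall a b, eps_id (T1 (tpure a b)) = a * b /\
                   id_eps (T2 (tpure a b)) = a * b),
      tinverse T1 T1i /\ tinverse T2 T2i &
      (forall s, teq (T1i s) (id_eps_id (id_tmap T1i (Delta_id s)))) /\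
      (forall s, teq (T2i s) (id_eps_id (tmap_id T2i (id_Delta s))))].

Definition is_antipode (T1i : tensor A A -> tensor A A) (S : A -> A) : Prop :=
  forall a b, S a * b = eps_id (T1i (tpure a b)).

(* Hopf coquasigroup in the sense of Klim--Majid *)
Definition hopf_coquasigroup (S : A -> A) : Prop :=
  [/\ Delta_alg_hom /\ teq (Delta 1) (tpure 1 1),
      [/\ linear_eps, (forall a b, eps (a * b) = eps a * eps b) & eps 1 = 1],
      (forall a, eps_id (Delta a) = a /\ id_eps (Delta a) = a),
      (forall c a b, S (c *: a + b) = c *: S a + S b) &
      (forall a,
        [/\ (* (m (x) id)(S (x) Delta)Delta(a) = 1 (x) a *)
            teq [seq (S p.1 * q.1, q.2) | p <- Delta a, q <- Delta p.2]
                (tpure 1 a),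
            (* (m (x) id)(id (x) S (x) id)(id (x) Delta)Delta(a) = 1 (x) a *)
            teq [seq (p.1 * S q.1, q.2) | p <- Delta a, q <- Delta p.2]
                (tpure 1 a),
            (* (id (x) m)(Delta (x) S)Delta(a) = a (x) 1 *)
            teq [seq (q.1, q.2 * S p.2) | p <- Delta a, q <- Delta p.1]
                (tpure a 1) &
            (* (id (x) m)(id (x) S (x) id)(Delta (x) id)Delta(a) = a (x) 1 *)
            teq [seq (q.1, S q.2 * p.2) | p <- Delta a, q <- Delta p.1]
                (tpure a 1)])].

End HopfCoquasigroups.

(* Main.v *)
Require Import Defs.
From HB Require Import structures.
From mathcomp Require Import all_boot all_order all_algebra.
Set Implicit Arguments. Unset Strict Implicit. Unset Printing Implicit Defensive.
Import GRing.Theory.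
Local Open Scope ring_scope.
Section Generic.
Variable k : fieldType.

Definition lin (V U : lmodType k) (f : V -> U) :=
  forall c x y, f (c *: x + y) = c *: f x + f y.

Lemma lin0 (V U : lmodType k) (f : V -> U) : lin f -> f 0 = 0.
Proof.
move=> hf; have h := hf 1 0 0; rewrite !scale1r addr0 in h.
by apply: (@addIr _ (f 0)); rewrite add0r -h.
Qed.

Lemma linD (V U : lmodType k) (f : V -> U) : lin f -> forall x y, f (x + y) = f x + f y.
Proof. by move=> hf x y; have := hf 1 x y; rewrite !scale1r. Qed.

Lemma linZ (V U : lmodType k) (f : V -> U) : lin f -> forall c x, f (c *: x) = c *: f x.
Proof. by move=> hf c x; rewrite -[c *: x]addr0 hf (lin0 hf) addr0. Qed.

Lemma lin_sum (V U : lmodType k) (f : V -> U) (I : Type) (r : seq I) (F : I -> V) :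
  lin f -> f (\sum_(i <- r) F i) = \sum_(i <- r) f (F i).
Proof.
move=> hf; elim: r => [|x r IH]; first by rewrite !big_nil (lin0 hf).
by rewrite !big_cons (linD hf) IH.
Qed.

Lemma lin_sumf (V U : lmodType k) (I : Type) (r : seq I) (F : I -> V -> U) :
  (forall i, lin (F i)) -> lin (fun v => \sum_(i <- r) F i v).
Proof.
move=> hF c x y; rewrite scaler_sumr -big_split /=.
by apply: eq_bigr => i _; rewrite hF.
Qed.

Lemma bl_l (V W U : lmodType k) (b : V -> W -> U) : bilinear_map b -> forall w, lin (b^~ w).
Proof. by case=> h1 h2 w c x y; rewrite h1. Qed.
Lemma bl_r (V W U : lmodType k) (b : V -> W -> U) : bilinear_map b -> forall v, lin (b v).
Proof. by case=> h1 h2 v c x y; rewrite h2. Qed.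
Lemma bl_mk (V W U : lmodType k) (b : V -> W -> U) :
  (forall w, lin (b^~ w)) -> (forall v, lin (b v)) -> bilinear_map b.
Proof. by move=> h1 h2; split=> *; [apply: h1|apply: h2]. Qed.

Lemma teq_refl (V W : lmodType k) (s : tensor V W) : teq s s.
Proof. by []. Qed.
Lemma teq_sym (V W : lmodType k) (s t : tensor V W) : teq s t -> teq t s.
Proof. by move=> h U b hb; rewrite h. Qed.
Lemma teq_trans (V W : lmodType k) (s t u : tensor V W) : teq s t -> teq t u -> teq s u.
Proof. by move=> h1 h2 U b hb; rewrite h1 // h2. Qed.

Lemma teval_cat (V W U : lmodType k) (b : V -> W -> U) s t :
  teval b (s ++ t) = teval b s + teval b t.
Proof. by rewrite /teval big_cat. Qed.

Lemma teq_cat (V W : lmodType k) (s s' t t' : tensor V W) :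
  teq s s' -> teq t t' -> teq (s ++ t) (s' ++ t').
Proof. by move=> h1 h2 U b hb; rewrite !teval_cat h1 // h2. Qed.

End Generic.

Section Main.
Variables (k : fieldType) (A : algType k) (Delta : A -> tensor A A) (eps : A -> k).
Hypothesis hDl : forall c a b, teq (Delta (c *: a + b)) (tscale c (Delta a) ++ Delta b).
Hypothesis hDm : forall a b, teq (Delta (a * b)) (tmul (Delta a) (Delta b)).
Hypothesis heps : linear_eps eps.

Lemma lin_mulr (y : A) : lin (fun x : A => x * y).
Proof. by move=> c x z; rewrite mulrDl scalerAl. Qed.
Lemma lin_mull (y : A) : lin (fun x : A => y * x).
Proof. by move=> c x z; rewrite mulrDr scalerAr. Qed.
Lemma lin_comp (U V W : lmodType k) (f : V -> W) (g : U -> V) :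
  lin f -> lin g -> lin (fun x => f (g x)).
Proof. by move=> hf hg c x y; rewrite hg hf. Qed.
Lemma lin_epsZ (V : lmodType k) (u : V) : lin (fun v : A => eps v *: u).
Proof. by move=> c x y; rewrite heps scalerDl scalerA. Qed.
Lemma lin_scal (V : lmodType k) (e : k) : lin (fun v : V => e *: v).
Proof. by move=> c x y; rewrite scalerDr !scalerA mulrC. Qed.

Lemma eps0 : eps 0 = 0.
Proof. have h := heps 1 0 0; rewrite scale1r addr0 mul1r in h.
by apply: (@addIr _ (eps 0)); rewrite add0r -h. Qed.
Lemma epsD x y : eps (x + y) = eps x + eps y.
Proof. by have := heps 1 x y; rewrite scale1r mul1r. Qed.
Lemma epsZ c x : eps (c *: x) = c * eps x.
Proof. by rewrite -[c *: x]addr0 heps eps0 addr0. Qed.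
Lemma eps_sum (I : Type) (r : seq I) (F : I -> A) :
  eps (\sum_(i <- r) F i) = \sum_(i <- r) eps (F i).
Proof.
elim: r => [|x r IH]; first by rewrite !big_nil eps0.
by rewrite !big_cons epsD IH.
Qed.

Lemma teval_tscale (U : lmodType k) (b : A -> A -> U) c (s : tensor A A) :
  bilinear_map b -> teval b (tscale c s) = c *: teval b s.
Proof.
move=> hb; rewrite /teval /tscale big_map scaler_sumr; apply: eq_bigr => x _ /=.
by rewrite (linZ (bl_l hb _)).
Qed.

Lemma teval_lin (U : lmodType k) (b : A -> A -> U) c (s t : tensor A A) :
  bilinear_map b -> teval b (tscale c s ++ t) = c *: teval b s + teval b t.
Proof. by move=> hb; rewrite teval_cat teval_tscale. Qed.

Lemma teq_tscale c (s t : tensor A A) : teq s t -> teq (tscale c s) (tscale c t).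
Proof. by move=> h U b hb; rewrite !teval_tscale // h. Qed.

Lemma Delta_lin (U : lmodType k) (b : A -> A -> U) :
  bilinear_map b -> lin (fun a => teval b (Delta a)).
Proof. by move=> hb c x y; rewrite hDl // teval_lin. Qed.

Lemma bl_compr (U : lmodType k) (b : A -> A -> U) (g : A -> A) :
  bilinear_map b -> lin g -> bilinear_map (fun x y => b x (g y)).
Proof.
move=> hb hg; apply: bl_mk => [w|v]; first exact: (bl_l hb).
exact: (lin_comp (bl_r hb v) hg).
Qed.
Lemma bl_compl (U : lmodType k) (b : A -> A -> U) (g : A -> A) :
  bilinear_map b -> lin g -> bilinear_map (fun x y => b (g x) y).
Proof.
move=> hb hg; apply: bl_mk => [w|v]; last exact: (bl_r hb).
exact: (lin_comp (bl_l hb w) hg).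
Qed.

Lemma teval_T1 (U : lmodType k) (b : A -> A -> U) s :
  teval b (T1 Delta s) = teval (fun u v => \sum_(p <- Delta u) b p.1 (p.2 * v)) s.
Proof. by rewrite /teval /T1 big_allpairs_dep. Qed.

Lemma bl_T1 (U : lmodType k) (b : A -> A -> U) : bilinear_map b ->
  bilinear_map (fun u v => \sum_(p <- Delta u) b p.1 (p.2 * v)).
Proof.
move=> hb; apply: bl_mk => [w|v].
  exact: (Delta_lin (bl_compr hb (lin_mulr w))).
apply: lin_sumf => p; exact: (lin_comp (bl_r hb _) (lin_mull _)).
Qed.

Lemma teq_T1 s t : teq s t -> teq (T1 Delta s) (T1 Delta t).
Proof. by move=> h U b hb; rewrite !teval_T1 h //; apply: bl_T1. Qed.

Lemma T1_cat s t : T1 Delta (s ++ t) = T1 Delta s ++ T1 Delta t.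
Proof. by rewrite /T1 map_cat flatten_cat. Qed.

Lemma T1_scale c s : teq (T1 Delta (tscale c s)) (tscale c (T1 Delta s)).
Proof.
move=> U b hb; rewrite teval_tscale // !teval_T1 /teval /tscale big_map scaler_sumr.
apply: eq_bigr => x _ /=.
exact: (linZ (Delta_lin (bl_compr hb (lin_mulr x.2)))).
Qed.

Lemma teval_T2 (U : lmodType k) (b : A -> A -> U) s :
  teval b (T2 Delta s) = teval (fun u v => \sum_(p <- Delta v) b (u * p.1) p.2) s.
Proof. by rewrite /teval /T2 big_allpairs_dep. Qed.

Lemma bl_T2 (U : lmodType k) (b : A -> A -> U) : bilinear_map b ->
  bilinear_map (fun u v => \sum_(p <- Delta v) b (u * p.1) p.2).
Proof.
move=> hb; apply: bl_mk => [w|v].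
  apply: lin_sumf => p; exact: (lin_comp (bl_l hb _) (lin_mulr _)).
exact: (Delta_lin (bl_compl hb (lin_mull v))).
Qed.

Lemma teq_T2 s t : teq s t -> teq (T2 Delta s) (T2 Delta t).
Proof. by move=> h U b hb; rewrite !teval_T2 h //; apply: bl_T2. Qed.

Lemma T2_cat s t : T2 Delta (s ++ t) = T2 Delta s ++ T2 Delta t.
Proof. by rewrite /T2 map_cat flatten_cat. Qed.

Lemma T2_scale c s : teq (T2 Delta (tscale c s)) (tscale c (T2 Delta s)).
Proof.
move=> U b hb; rewrite teval_tscale // !teval_T2 /teval /tscale big_map scaler_sumr.
apply: eq_bigr => x _ /=; rewrite scaler_sumr; apply: eq_bigr => p _.
by rewrite -scalerAl (linZ (bl_l hb _)).
Qed.

Lemma bl_tmul (U : lmodType k) (b : A -> A -> U) (t : tensor A A) : bilinear_map b ->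
  bilinear_map (fun u v => \sum_(y <- t) b (u * y.1) (v * y.2)).
Proof.
move=> hb; apply: bl_mk => [w|v]; apply: lin_sumf => y.
  exact: (lin_comp (bl_l hb _) (lin_mulr _)).
exact: (lin_comp (bl_r hb _) (lin_mulr _)).
Qed.
Lemma bl_tmul' (U : lmodType k) (b : A -> A -> U) (s : tensor A A) : bilinear_map b ->
  bilinear_map (fun u v => \sum_(x <- s) b (x.1 * u) (x.2 * v)).
Proof.
move=> hb; apply: bl_mk => [w|v]; apply: lin_sumf => y.
  exact: (lin_comp (bl_l hb _) (lin_mull _)).
exact: (lin_comp (bl_r hb _) (lin_mull _)).
Qed.

Lemma teq_tmull (s s' t : tensor A A) : teq s s' -> teq (tmul s t) (tmul s' t).
Proof.
move=> h U b hb; rewrite /teval /tmul !big_allpairs_dep.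
exact: (h _ _ (bl_tmul t hb)).
Qed.
Lemma teq_tmulr (s t t' : tensor A A) : teq t t' -> teq (tmul s t) (tmul s t').
Proof.
move=> h U b hb; rewrite /teval /tmul !big_allpairs_dep.
rewrite exchange_big [RHS]exchange_big /=.
exact: (h _ _ (bl_tmul' s hb)).
Qed.


Lemma inv_lin (T Ti : tensor A A -> tensor A A) :
  (forall s t, T (s ++ t) = T s ++ T t) ->
  (forall c s, teq (T (tscale c s)) (tscale c (T s))) ->
  tinverse T Ti ->
  forall c s t, teq (Ti (tscale c s ++ t)) (tscale c (Ti s) ++ Ti t).
Proof.
move=> Tc Ts [Tr TTi TiT] c s t.
apply: (teq_trans (t := Ti (T (tscale c (Ti s) ++ Ti t)))); last exact: TiT.
apply: Tr; rewrite Tc; apply: teq_trans (teq_cat (teq_sym (Ts _ _)) (teq_refl _)).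
apply: teq_cat; last exact: teq_sym.
by apply: teq_tscale; apply: teq_sym.
Qed.

Lemma bl_epsid : bilinear_map (fun u v : A => eps u *: v).
Proof. apply: bl_mk => [w|v]; [exact: lin_epsZ | exact: lin_scal]. Qed.
Lemma bl_ideps : bilinear_map (fun u v : A => eps v *: u).
Proof. apply: bl_mk => [w|v]; [exact: lin_scal | exact: lin_epsZ]. Qed.
Lemma bl_mul : bilinear_map (fun u v : A => u * v).
Proof. apply: bl_mk => [w|v]; [exact: lin_mulr | exact: lin_mull]. Qed.

Lemma teq_eps_id (s t : tensor A A) : teq s t -> eps_id eps s = eps_id eps t.
Proof. by move=> h; apply: (h _ _ bl_epsid). Qed.
Lemma teq_id_eps (s t : tensor A A) : teq s t -> id_eps eps s = id_eps eps t.
Proof. by move=> h; apply: (h _ _ bl_ideps). Qed.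
Lemma eps_id_lin c (s t : tensor A A) :
  eps_id eps (tscale c s ++ t) = c *: eps_id eps s + eps_id eps t.
Proof. exact: (teval_lin c s t bl_epsid). Qed.
Lemma id_eps_lin c (s t : tensor A A) :
  id_eps eps (tscale c s ++ t) = c *: id_eps eps s + id_eps eps t.
Proof. exact: (teval_lin c s t bl_ideps). Qed.
Definition mm (s : tensor A A) := teval (fun u v : A => u * v) s.
Lemma teq_mm (s t : tensor A A) : teq s t -> mm s = mm t.
Proof. by move=> h; apply: (h _ _ bl_mul). Qed.

Lemma teval_pure (U : lmodType k) (b : A -> A -> U) (x y : A) : teval b (tpure x y) = b x y.
Proof. by rewrite /teval /tpure big_seq1. Qed.

Lemma tpure_lin c (x x' y : A) : teq (tpure (c *: x + x') y) (tscale c (tpure x y) ++ tpure x' y).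
Proof.
move=> U b hb; rewrite teval_lin // !teval_pure.
by rewrite (bl_l hb).
Qed.
Lemma tpure_linr c (x y y' : A) : teq (tpure x (c *: y + y')) (tscale c (tpure x y) ++ tpure x y').
Proof.
move=> U b hb; rewrite teval_lin // !teval_pure.
by rewrite (bl_r hb).
Qed.

Variables (T1i T2i : tensor A A -> tensor A A) (S : A -> A).
Hypothesis hc1 : forall a b, eps_id eps (T1 Delta (tpure a b)) = a * b.
Hypothesis hc2 : forall a b, id_eps eps (T2 Delta (tpure a b)) = a * b.
Hypothesis hT1i : tinverse (T1 Delta) T1i.
Hypothesis hT2i : tinverse (T2 Delta) T2i.
Hypothesis hF1 : forall s, teq (T1i s) (id_eps_id eps (id_tmap T1i (Delta_id Delta s))).
Hypothesis hF2 : forall s, teq (T2i s) (id_eps_id eps (tmap_id T2i (id_Delta Delta s))).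
Hypothesis hS : forall a b, S a * b = eps_id eps (T1i (tpure a b)).

Lemma T1i_resp s t : teq s t -> teq (T1i s) (T1i t).
Proof. by case: hT1i => h _ _; apply: h. Qed.
Lemma T2i_resp s t : teq s t -> teq (T2i s) (T2i t).
Proof. by case: hT2i => h _ _; apply: h. Qed.
Lemma T1T1i s : teq (T1 Delta (T1i s)) s. Proof. by case: hT1i. Qed.
Lemma T1iT1 s : teq (T1i (T1 Delta s)) s. Proof. by case: hT1i. Qed.
Lemma T2T2i s : teq (T2 Delta (T2i s)) s. Proof. by case: hT2i. Qed.
Lemma T2iT2 s : teq (T2i (T2 Delta s)) s. Proof. by case: hT2i. Qed.

Lemma hc1' u v : \sum_(p <- Delta u) eps p.1 *: (p.2 * v) = u * v.
Proof. by rewrite -hc1 /eps_id /T1 /tpure big_allpairs_dep big_seq1. Qed.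
Lemma hc2' u v : \sum_(p <- Delta v) eps p.2 *: (u * p.1) = u * v.
Proof. by rewrite -hc2 /id_eps /T2 /tpure big_allpairs_dep big_seq1. Qed.

Lemma counit1 a : eps_id eps (Delta a) = a.
Proof.
rewrite -[RHS]mulr1 -hc1' /eps_id; apply: eq_bigr => p _; by rewrite mulr1.
Qed.
Lemma counit2 a : id_eps eps (Delta a) = a.
Proof.
rewrite -[RHS]mul1r -hc2' /id_eps; apply: eq_bigr => p _; by rewrite mul1r.
Qed.

Lemma eps_id_T1 s : eps_id eps (T1 Delta s) = mm s.
Proof.
rewrite /eps_id /T1 /mm /teval big_allpairs_dep; apply: eq_bigr => x _.
exact: hc1'.
Qed.
Lemma id_eps_T2 s : id_eps eps (T2 Delta s) = mm s.
Proof.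
rewrite /id_eps /T2 /mm /teval big_allpairs_dep; apply: eq_bigr => x _.
exact: hc2'.
Qed.

Lemma S_lin : lin S.
Proof.
move=> c x y; rewrite -[S _]mulr1 hS.
rewrite (teq_eps_id (T1i_resp (tpure_lin c x y 1))).
rewrite (teq_eps_id (inv_lin T1_cat T1_scale hT1i c _ _)).
by rewrite eps_id_lin -!hS !mulr1.
Qed.

Definition ff (a b : A) := id_eps eps (T2i (tpure a b)).
Lemma ff_lin a : lin (ff a).
Proof.
move=> c x y; rewrite /ff.
rewrite (teq_id_eps (T2i_resp (tpure_linr c a x y))).
rewrite (teq_id_eps (inv_lin T2_cat T2_scale hT2i c _ _)).
by rewrite id_eps_lin.
Qed.


Definition F1rhs (s : tensor A A) : tensor A A :=
  [seq (p.1, S p.2 * x.2) | x <- s, p <- Delta x.1].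
Lemma F1 s : teq (T1i s) (F1rhs s).
Proof.
apply: teq_trans (hF1 s) _ => U b hb.
rewrite /teval /id_eps_id /id_tmap /Delta_id /F1rhs big_map !big_allpairs_dep /=.
apply: eq_bigr => x _; apply: eq_bigr => p _.
by rewrite hS /eps_id (lin_sum _ _ (bl_r hb _)).
Qed.

Definition F2rhs (s : tensor A A) : tensor A A :=
  [seq (ff x.1 p.1, p.2) | x <- s, p <- Delta x.2].
Lemma F2 s : teq (T2i s) (F2rhs s).
Proof.
apply: teq_trans (hF2 s) _ => U b hb.
rewrite /teval /id_eps_id /tmap_id /id_Delta /F2rhs big_map !big_allpairs_dep /=.
apply: eq_bigr => x _; apply: eq_bigr => p _.
rewrite /ff /id_eps (lin_sum _ _ (bl_l hb _)); apply: eq_bigr => q _.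
by rewrite (linZ (bl_l hb _)) (linZ (bl_r hb _)).
Qed.

Lemma mm_T2i a b : \sum_(p <- Delta b) ff a p.1 * p.2 = eps b *: a.
Proof.
have := teq_mm (F2 (tpure a b)).
rewrite -id_eps_T2 (teq_id_eps (T2T2i _)) /mm /teval /F2rhs /tpure big_allpairs_dep.
by rewrite /id_eps !big_seq1 /= => ->.
Qed.

Lemma I3 a : teq [seq (q.1, q.2 * S p.2) | p <- Delta a, q <- Delta p.1] (tpure a 1).
Proof.
apply: teq_trans (T1T1i (tpure a 1)).
apply: teq_trans (teq_T1 (teq_sym (F1 _))) => U b hb.
rewrite teval_T1 /teval /F1rhs /tpure !big_allpairs_dep big_seq1 /=.
by apply: eq_bigr => p _; apply: eq_bigr => q _; rewrite mulr1.
Qed.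

Lemma ff_S a b : ff a b = a * S b.
Proof.
have bl : bilinear_map (fun u v => ff a u * v).
  apply: bl_mk => [w|v]; [exact: (lin_comp (lin_mulr w) (ff_lin a)) | exact: lin_mull].
have := I3 b bl; rewrite teval_pure mulr1 => <-.
rewrite /teval big_allpairs_dep /=.
under eq_bigr => p _ do (under eq_bigr => q _ do rewrite mulrA; rewrite -mulr_suml mm_T2i).
rewrite -{2}(counit1 b) /eps_id (lin_sum _ _ S_lin) mulr_sumr; apply: eq_bigr => p _.
by rewrite (linZ S_lin) -scalerAl -scalerAr.
Qed.

Lemma I4 a : teq [seq (q.1, S q.2 * p.2) | p <- Delta a, q <- Delta p.1] (tpure a 1).
Proof.
apply: teq_trans (T1iT1 (tpure a 1)).
apply: teq_trans (teq_sym (F1 _)) => U b hb.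
rewrite /teval /F1rhs /T1 /tpure !big_allpairs_dep big_seq1 /=.
by apply: eq_bigr => p _; apply: eq_bigr => q _; rewrite mulr1.
Qed.

Lemma I1 a : teq [seq (S p.1 * q.1, q.2) | p <- Delta a, q <- Delta p.2] (tpure 1 a).
Proof.
apply: teq_trans (T2T2i (tpure 1 a)).
apply: teq_trans (teq_T2 (teq_sym (F2 _))) => U b hb.
rewrite teval_T2 /teval /F2rhs /tpure !big_allpairs_dep big_seq1 /=.
by apply: eq_bigr => p _; apply: eq_bigr => q _; rewrite ff_S mul1r.
Qed.

Lemma I2 a : teq [seq (p.1 * S q.1, q.2) | p <- Delta a, q <- Delta p.2] (tpure 1 a).
Proof.
apply: teq_trans (T2iT2 (tpure 1 a)).
apply: teq_trans (teq_sym (F2 _)) => U b hb.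
rewrite /teval /F2rhs /T2 /tpure !big_allpairs_dep big_seq1 /=.
by apply: eq_bigr => p _; apply: eq_bigr => q _; rewrite ff_S mul1r.
Qed.


Lemma L_mulT1 (a : A) (w : tensor A A) :
  teq (tmul (Delta a) (T1 Delta w)) (T1 Delta (tmul (tpure a 1) w)).
Proof.
move=> U b hb; rewrite teval_T1 /teval /tmul big_allpairs_dep.
under eq_bigr => p _ do rewrite /T1 big_allpairs_dep.
rewrite exchange_big /tpure big_allpairs_dep big_seq1 /=; apply: eq_bigr => x _ /=.
have := hDm a x.1 (bl_compr hb (lin_mulr x.2)).
rewrite /teval /tmul big_allpairs_dep /= => h.
under [RHS]eq_bigr => r _ do rewrite mul1r.
rewrite h; apply: eq_bigr => p _; apply: eq_bigr => q _.
by rewrite mulrA.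
Qed.

Lemma tmul1l (w : tensor A A) : teq (tmul (tpure 1 1) w) w.
Proof.
move=> U b hb; rewrite /teval /tmul /tpure big_allpairs_dep big_seq1 /=.
by apply: eq_bigr => x _; rewrite !mul1r.
Qed.
Lemma tmul1r (s : tensor A A) : teq (tmul s (tpure 1 1)) s.
Proof.
move=> U b hb; rewrite /teval /tmul /tpure big_allpairs_dep /=.
by apply: eq_bigr => x _; rewrite big_seq1 !mulr1.
Qed.

Lemma Delta1 : teq (Delta 1) (tpure 1 1).
Proof.
apply: teq_sym.
apply: teq_trans (teq_sym (T1T1i (tpure 1 1))) _.
apply: teq_trans (teq_T1 (teq_sym (tmul1l (T1i (tpure 1 1))))) _.
apply: teq_trans (teq_sym (L_mulT1 _ _)) _.
apply: teq_trans (teq_tmulr _ (T1T1i _)) _.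
exact: tmul1r.
Qed.

Lemma L1 (a : A) (y : tensor A A) : eps_id eps (tmul (Delta a) y) = a * eps_id eps y.
Proof.
have hy := teq_sym (T1T1i y).
rewrite (teq_eps_id (teq_tmulr _ hy)) (teq_eps_id (L_mulT1 _ _)) eps_id_T1.
rewrite (teq_eps_id hy) eps_id_T1.
rewrite /mm /teval /tmul /tpure big_allpairs_dep big_seq1 mulr_sumr /=.
by apply: eq_bigr => x _; rewrite mul1r mulrA.
Qed.

Lemma eps_mul a b : eps (a * b) = eps a * eps b.
Proof.
have e1 : \sum_(p <- Delta a) eps (p.1 * b) * eps p.2 = eps b * eps a.
  have := L1 a (tpure b 1).
  rewrite /eps_id /tmul /tpure big_allpairs_dep !big_seq1 /=.
  under eq_bigr => p _ do rewrite big_seq1 mulr1.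
  move/(congr1 eps); rewrite eps_sum -scalerAr mulr1 epsZ => <-.
  by apply: eq_bigr => p _; rewrite epsZ.
have e2 : eps (a * b) = \sum_(p <- Delta a) eps p.2 * eps (p.1 * b).
  rewrite -{1}(counit2 a) /id_eps mulr_suml eps_sum; apply: eq_bigr => p _.
  by rewrite -scalerAl epsZ.
rewrite e2 mulrC -e1; apply: eq_bigr => p _; exact: mulrC.
Qed.

Lemma eps1 : eps 1 = 1.
Proof.
have := counit1 1; rewrite (teq_eps_id Delta1) /eps_id /tpure big_seq1 /= => h.
have : (eps 1 - 1) *: (1 : A) == 0 by rewrite scalerBl h scale1r subrr.
by rewrite scaler_eq0 oner_eq0 orbF subr_eq0 => /eqP.
Qed.

End Main.

Theorem theorem3p1 (k : fieldType) (A : algType k)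
  (Delta : A -> tensor A A) (eps : A -> k)
  (T1i T2i : tensor A A -> tensor A A) (S : A -> A) :
  gen_mult_hopf_coquasigroup Delta eps T1i T2i ->
  is_antipode eps T1i S ->
  hopf_coquasigroup Delta eps S.
Proof.
case=> [[hDl hDm] heps hc [hT1i hT2i] [hF1 hF2]] hS.
have hc1 : forall a b, eps_id eps (T1 Delta (tpure a b)) = a * b by move=> a b; case: (hc a b).
have hc2 : forall a b, id_eps eps (T2 Delta (tpure a b)) = a * b by move=> a b; case: (hc a b).
split.
- split; first by split.
  by eapply Delta1; eauto.
- split => //.
  + by eapply eps_mul; eauto.
  + by eapply eps1; eauto.
- by move=> a; split; [by eapply counit1; eauto | by eapply counit2; eauto].
- by eapply S_lin; eauto.
- move=> a; split.
  + by eapply I1; eauto.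
  + by eapply I2; eauto.
  + by eapply I3; eauto.
  + by eapply I4; eauto.
Qed.
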